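(* Let $(X,\tau)$ be a topological space and $A\subseteq X$. Then $A$ is statistically compact in $(X,\tau)$ if and only if $A$ is statistically compact in $(X,\tau_{ST})$.
   Context: For $A\subseteq\mathbb{N}$ let $d_n(A)=|A\cap\{1,\dots,n\}|/n$, $\overline{d}(A)=\limsup_n d_n(A)$, $\underline{d}(A)=\liminf_n d_n(A)$, and $d(A)$ their common value when equal. A sequence in $X$ is a map from an infinite subset $M\subseteq\mathbb{N}$ into $X$, written $(x_n)_{n\in M}$; a subsequence is $(x_n)_{n\in N}$ with $N\subseteq M$ infinite. It is nonthin if $\overline{d}(M)>0$. A nonthin sequence $(x_n)_{n\in M}$ is statistically convergent to $a\in X$ if for every open $U\ni a$, $d(\{n\in M:x_n\notin U\})=0$. The statistical closure $\overline{F}^{ST}$ of $F\subseteq X$ is the set of $x\in X$ such that some nonthin sequence in $F$ is statistically convergent to $x$; $F$ is statistically closed if $\overline{F}^{ST}=F$. $\tau_{ST}=\{F\subseteq X: X\setminus F$ is statistically closed in $(X,\tau)\}$; this is a topology on $X$ containing $\tau$. A topological space is statistically compact if every nonthin sequence in it has a nonthin subsequence that is statistically convergent to some point of the space; a subset is statistically compact if it is so in the subspace topology. *)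

(* Defs.v *)
From Stdlib Require Import Reals ClassicalEpsilon.
From Coquelicot Require Import Coquelicot.
Open Scope R_scope.

Definition is_topology {T : Type} (O : (T -> Prop) -> Prop) : Prop :=
  O (fun _ => True) /\ O (fun _ => False) /\
  (forall U V, O U -> O V -> O (fun x => U x /\ V x)) /\
  (forall (I : Type) (F : I -> T -> Prop), (forall i, O (F i)) ->
     O (fun x => exists i, F i x)).

Fixpoint cnt (A : nat -> Prop) (n : nat) : nat :=
  match n with
  | O => O
  | S m => (cnt A m + (if excluded_middle_informative (A (S m)) then 1 else 0))%nat
  end.

Definition dens (A : nat -> Prop) (n : nat) : R := INR (cnt A n) / INR n.

Definition density_zero (A : nat -> Prop) : Prop := is_lim_seq (dens A) 0.

Definition index_set (M : nat -> Prop) : Prop :=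
  (forall n, M n -> (0 < n)%nat) /\ (forall N, exists n, (N <= n)%nat /\ M n).

(* A sequence (x_n)_{n in M} is represented by M and x : nat -> T
   (only the values on M matter).  Nonthin: upper density of M is > 0. *)
Definition nonthin (M : nat -> Prop) : Prop :=
  index_set M /\ Rbar_lt 0 (LimSup_seq (dens M)).

Definition stat_conv {T : Type} (O : (T -> Prop) -> Prop)
  (M : nat -> Prop) (x : nat -> T) (a : T) : Prop :=
  nonthin M /\
  forall U, O U -> U a -> density_zero (fun n => M n /\ ~ U (x n)).

Definition stat_closure {T : Type} (O : (T -> Prop) -> Prop)
  (F : T -> Prop) (a : T) : Prop :=
  exists (M : nat -> Prop) (x : nat -> T),
    nonthin M /\ (forall n, M n -> F (x n)) /\ stat_conv O M x a.

Definition stat_closed {T : Type} (O : (T -> Prop) -> Prop) (F : T -> Prop) : Prop :=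
  forall a, stat_closure O F a <-> F a.

Definition tau_ST {T : Type} (O : (T -> Prop) -> Prop) : (T -> Prop) -> Prop :=
  fun G => stat_closed O (fun x => ~ G x).

Definition stat_compact {T : Type} (O : (T -> Prop) -> Prop) : Prop :=
  forall (M : nat -> Prop) (x : nat -> T), nonthin M ->
    exists N : nat -> Prop, (forall n, N n -> M n) /\ nonthin N /\
      exists a : T, stat_conv O N x a.

Definition subspace {T : Type} (O : (T -> Prop) -> Prop) (A : T -> Prop)
  : ({y : T | A y} -> Prop) -> Prop :=
  fun V => exists U, O U /\ forall y : {y : T | A y}, V y <-> U (proj1_sig y).

Definition stat_compact_subset {T : Type} (O : (T -> Prop) -> Prop) (A : T -> Prop) : Prop :=
  stat_compact (subspace O A).

(* Main.v *)
Require Import Defs.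
From Stdlib Require Import Reals Lra Lia Classical ClassicalEpsilon.
From Coquelicot Require Import Coquelicot.
Open Scope R_scope.

Lemma cnt_mono (A B : nat -> Prop) : (forall n, A n -> B n) -> forall n, (cnt A n <= cnt B n)%nat.
Proof.
  intros H n; induction n as [|n IH]; simpl; [lia|].
  destruct (excluded_middle_informative (A (S n))) as [a|a];
  destruct (excluded_middle_informative (B (S n))) as [b|b]; try lia.
  exfalso; apply b, H, a.
Qed.

Lemma cnt_le_n (A : nat -> Prop) n : (cnt A n <= n)%nat.
Proof.
  induction n; simpl; [lia|].
  destruct (excluded_middle_informative (A (S n))); lia.
Qed.

Lemma dens_nonneg A n : 0 <= dens A n.
Proof.
  unfold dens. destruct n. simpl. unfold Rdiv. rewrite Rinv_0. lra.
  apply Rdiv_le_0_compat. apply pos_INR. apply lt_0_INR; lia.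
Qed.

Lemma dens_mono (A B : nat -> Prop) : (forall n, A n -> B n) -> forall n, dens A n <= dens B n.
Proof.
  intros H n. unfold dens. destruct n. simpl. lra.
  apply Rmult_le_compat_r. left; apply Rinv_0_lt_compat, lt_0_INR; lia.
  apply le_INR, cnt_mono, H.
Qed.

Lemma dz_sub (A B : nat -> Prop) : (forall n, A n -> B n) -> density_zero B -> density_zero A.
Proof.
  intros H HB. unfold density_zero.
  apply (is_lim_seq_le_le (fun _ => 0) _ (dens B)); [|apply is_lim_seq_const|exact HB].
  intros n; split; [apply dens_nonneg|apply dens_mono, H].
Qed.

Lemma nonthin_not_dz M : nonthin M -> ~ density_zero M.
Proof.
  intros [_ H] Hd. apply is_lim_LimSup_seq, is_LimSup_seq_unique in Hd.
  rewrite Hd in H. simpl in H. lra.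
Qed.

Lemma dz_of_LimSup (u : nat -> R) : (forall n, 0 <= u n) -> Rbar_le (LimSup_seq u) 0 ->
  is_lim_seq u 0.
Proof.
  intros Hp Hs.
  assert (Hi : Rbar_le 0 (LimInf_seq u)).
  { rewrite <- (LimInf_seq_const 0). apply LimInf_le. exists O. intros; apply Hp. }
  assert (E : LimSup_seq u = 0 /\ LimInf_seq u = 0).
  { pose proof (LimSup_LimInf_seq_le u).
    destruct (LimSup_seq u) as [s| |]; destruct (LimInf_seq u) as [i| |]; simpl in *;
      try tauto; split; f_equal; lra. }
  destruct E as [E1 E2].
  assert (Hex : ex_lim_seq u) by (apply ex_lim_LimSup_LimInf_seq; congruence).
  destruct Hex as [l Hl].
  pose proof (is_LimSup_seq_unique _ _ (is_lim_LimSup_seq _ _ Hl)) as H. rewrite E1 in H. subst l. exact Hl.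
Qed.

Lemma cnt_stable (K : nat -> Prop) N0 : (forall n, K n -> (n <= N0)%nat) ->
  forall n, (cnt K n <= N0)%nat.
Proof.
  intros H n; induction n; simpl; [lia|].
  destruct (excluded_middle_informative (K (S n))) as [k|k]; [|lia].
  pose proof (H _ k). assert (cnt K n <= n)%nat by apply cnt_le_n. lia.
Qed.

Lemma not_dz_nonthin K : (forall n, K n -> (0 < n)%nat) -> ~ density_zero K -> nonthin K.
Proof.
  intros Hpos Hnd. split; [split; [exact Hpos|]|].
  - intros N0. apply NNPP; intros Hno. apply Hnd.
    assert (Hb : forall n, K n -> (n <= N0)%nat).
    { intros n Kn. destruct (Compare_dec.le_lt_dec n N0); [auto|]. exfalso; apply Hno; exists n; split; [lia|auto]. }
    unfold density_zero.
    apply (is_lim_seq_le_le (fun _ => 0) _ (fun n => INR N0 * / INR n)); [|apply is_lim_seq_const|].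
    + intros n; split; [apply dens_nonneg|]. unfold dens, Rdiv. destruct n. simpl. rewrite Rinv_0. lra.
      apply Rmult_le_compat_r. left; apply Rinv_0_lt_compat, lt_0_INR; lia.
      apply le_INR, cnt_stable, Hb.
    + replace (Finite 0) with (Rbar_mult (INR N0) (Rbar_inv p_infty)) by (simpl; f_equal; ring).
      apply is_lim_seq_scal_l, is_lim_seq_inv. apply is_lim_seq_INR. discriminate.
  - destruct (LimSup_seq (dens K)) as [s| |] eqn:E; simpl; auto.
    + destruct (Rlt_le_dec 0 s) as [h|h]; auto. exfalso; apply Hnd.
      apply dz_of_LimSup; [apply dens_nonneg|]. rewrite E; simpl; lra.
    + exfalso; apply Hnd. apply dz_of_LimSup; [apply dens_nonneg|]. rewrite E; simpl; auto.
Qed.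

Lemma cnt_pos n : cnt (fun k => (0 < k)%nat) n = n.
Proof.
  induction n; simpl; auto.
  destruct (excluded_middle_informative (0 < S n)%nat); [lia|exfalso; lia].
Qed.

Lemma nonthin_pos : nonthin (fun k => (0 < k)%nat).
Proof.
  split; [split; [auto|intros N0; exists (S N0); split; lia]|].
  assert (H : is_lim_seq (dens (fun k => (0 < k)%nat)) 1).
  { apply (is_lim_seq_ext_loc (fun _ => 1)); [|apply is_lim_seq_const].
    exists 1%nat. intros n Hn. unfold dens. rewrite cnt_pos. field.
    apply not_0_INR; lia. }
  apply is_lim_LimSup_seq, is_LimSup_seq_unique in H. rewrite H. simpl. lra.
Qed.

Lemma dz_empty (A : nat -> Prop) : (forall n, ~ A n) -> density_zero A.
Proof.
  intros H. apply (dz_sub A (fun _ => False)); [intros n a; exact (H n a)|].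
  unfold density_zero.
  apply (is_lim_seq_ext (fun _ => 0)); [|apply is_lim_seq_const].
  intros n. unfold dens. assert (cnt (fun _ => False) n = 0%nat).
  { induction n; simpl; auto. destruct (excluded_middle_informative False); [tauto|lia]. }
  rewrite H0. simpl. unfold Rdiv. ring.
Qed.

Lemma tau_sub_ST {T : Type} (O : (T -> Prop) -> Prop) U : O U -> tau_ST O U.
Proof.
  intros HU b. split.
  - intros [M [y [HM [Hy [_ Hc]]]]] Ub.
    apply (nonthin_not_dz M HM).
    apply (dz_sub M (fun n => M n /\ ~ U (y n))); [intros n Mn; split; auto|].
    apply Hc; auto.
  - intros nUb. exists (fun k => (0 < k)%nat), (fun _ => b).
    split; [apply nonthin_pos|]. split; [intros; auto|].
    split; [apply nonthin_pos|]. intros V _ Vb. apply dz_empty. intros n [_ h]; auto.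
Qed.

Lemma core {T : Type} (O : (T -> Prop) -> Prop) N x a :
  stat_conv O N x a <-> stat_conv (tau_ST O) N x a.
Proof.
  split.
  - intros [HN Hc]. split; [exact HN|]. intros U HU Ua.
    apply NNPP; intros Hnd.
    assert (HK : nonthin (fun n => N n /\ ~ U (x n))).
    { apply not_dz_nonthin; auto. intros n [Nn _]. destruct HN as [[Hp _] _]. auto. }
    apply (proj1 (HU a)); auto.
    exists (fun n => N n /\ ~ U (x n)), x.
    split; [exact HK|]. split; [intros n [_ h]; exact h|].
    split; [exact HK|]. intros V HV Va.
    apply (dz_sub _ (fun n => N n /\ ~ V (x n))); [intros n [[Nn _] h]; auto|].
    apply Hc; auto.
  - intros [HN Hc]. split; [exact HN|]. intros U HU Ua. apply Hc; auto.
    apply tau_sub_ST; auto.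
Qed.

Lemma sub_conv {T : Type} (O : (T -> Prop) -> Prop) (A : T -> Prop) N
  (x : nat -> {y : T | A y}) a :
  stat_conv (subspace O A) N x a <->
  stat_conv O N (fun n => proj1_sig (x n)) (proj1_sig a).
Proof.
  split.
  - intros [HN Hc]. split; [exact HN|]. intros U HU Ua.
    apply (Hc (fun y => U (proj1_sig y))); auto. exists U; split; auto; tauto.
  - intros [HN Hc]. split; [exact HN|]. intros V [U [HU HV]] Va.
    apply (dz_sub _ (fun n => N n /\ ~ U (proj1_sig (x n))));
      [intros n [Nn h]; split; auto; intros u; apply h, HV, u|].
    apply Hc; auto. apply HV; auto.
Qed.

Theorem mainTheorem15 (X : Type) (tau : (X -> Prop) -> Prop)
  (Htau : is_topology tau) (A : X -> Prop) :
  stat_compact_subset tau A <-> stat_compact_subset (tau_ST tau) A.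
Proof.
  unfold stat_compact_subset, stat_compact. split.
  - intros H M x HM. destruct (H M x HM) as [N [HNM [HN [a Ha]]]].
    exists N; split; auto; split; auto; exists a.
    apply (proj2 (sub_conv _ _ _ _ _)), (proj1 (core _ _ _ _)), (proj1 (sub_conv _ _ _ _ _)), Ha.
  - intros H M x HM. destruct (H M x HM) as [N [HNM [HN [a Ha]]]].
    exists N; split; auto; split; auto; exists a.
    apply (proj2 (sub_conv _ _ _ _ _)), (proj2 (core _ _ _ _)), (proj1 (sub_conv _ _ _ _ _)), Ha.
Qed.
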